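(* Let $R$ be a ring whose only idempotents are $0$ and $1$. Then $R$ is a GSWNC ring if and only if $R$ is a local ring whose Jacobson radical $J(R)$ is nil.
   Context: All rings are associative with identity. An element $a$ of a ring is strongly weakly nil-clean if there exist an idempotent $e$ and a nilpotent $q$ with $eq = qe$ such that $a = q + e$ or $a = q - e$. A ring is GSWNC if every non-invertible element is strongly weakly nil-clean. *)

(* Defs.v *)
From HB Require Import structures.
From mathcomp Require Import all_boot all_algebra.
Set Implicit Arguments. Unset Strict Implicit. Unset Printing Implicit Defensive.
Import GRing.Theory.
Local Open Scope ring_scope.

(* Rings: associative with identity; MathComp's unitRingType (nontrivial rings
   with a decidable unit predicate; "invertible" = two-sided unit). *)

Definition idempotent_el (R : unitRingType) (e : R) : Prop := e * e = e.

Definition nilpotent_el (R : unitRingType) (q : R) : Prop :=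
  exists n : nat, q ^+ n = 0.

Definition strongly_weakly_nil_clean (R : unitRingType) (a : R) : Prop :=
  exists e q : R, idempotent_el e /\ nilpotent_el q /\ e * q = q * e /\
    (a = q + e \/ a = q - e).

Definition GSWNC (R : unitRingType) : Prop :=
  forall a : R, ~ (a \is a GRing.unit) -> strongly_weakly_nil_clean a.

Definition left_ideal (R : unitRingType) (I : R -> Prop) : Prop :=
  I 0 /\ (forall x y, I x -> I y -> I (x + y)) /\ (forall r x, I x -> I (r * x)).

Definition maximal_left_ideal (R : unitRingType) (I : R -> Prop) : Prop :=
  left_ideal I /\ ~ I 1 /\
  forall K : R -> Prop, left_ideal K -> ~ K 1 -> (forall x, I x -> K x) ->
    forall x, K x -> I x.

Definition local_ring (R : unitRingType) : Prop :=
  exists I : R -> Prop, maximal_left_ideal I /\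
    forall K : R -> Prop, maximal_left_ideal K -> forall x, K x <-> I x.

Definition jacobson (R : unitRingType) (x : R) : Prop :=
  forall I : R -> Prop, maximal_left_ideal I -> I x.

Definition jacobson_nil (R : unitRingType) : Prop :=
  forall x : R, jacobson x -> nilpotent_el x.

(* Main.v *)
Require Import Defs.
From mathcomp Require Import all_boot all_algebra.
From Stdlib Require Import Classical.
Import GRing.Theory.
Local Open Scope ring_scope.

Lemma nil_unit1 (R : unitRingType) (q : R) (n : nat) :
  q ^+ n = 0 -> (1 - q) \is a GRing.unit.
Proof.
move=> qn; set S := \sum_(i < n) q ^+ i.
have cS : q * S = S * q.
  by rewrite /S mulr_sumr mulr_suml; apply: eq_bigr => i _; rewrite -exprS -exprSr.
have h : (1 - q) * S = 1.
  have := @subrXX_comm R 1 q n (esym (commr1 q)).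
  rewrite expr1n qn subr0 => e.
  have -> : S = \sum_(i < n) 1 ^+ (n.-1 - i) * q ^+ i.
    by rewrite /S; apply: eq_bigr => i _; rewrite expr1n mul1r.
  by rewrite -e.
apply/unitrP; exists S; split=> //.
by rewrite mulrBr mulr1 -cS -{1}[S]mul1r -mulrBl.
Qed.

Lemma nil_unit2 (R : unitRingType) (q : R) :
  nilpotent_el q -> (1 + q) \is a GRing.unit.
Proof.
case=> n qn; have -> : 1 + q = 1 - (- q) by rewrite opprK.
apply: (@nil_unit1 R (- q) n); by rewrite exprNn qn mulr0.
Qed.

Lemma nil_linv (R : unitRingType) (q b : R) :
  nilpotent_el q -> b * q = 1 -> False.
Proof.
case=> n qn bq.
have k : forall k, b ^+ k * q ^+ k = 1.
  elim=> [|k IH]; first by rewrite !expr0 mul1r.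
  by rewrite exprSr exprS mulrA -(mulrA _ b) bq mulr1.
by move: (k n); rewrite qn mulr0 => /eqP; rewrite eq_sym oner_eq0.
Qed.

Lemma nil_mul_nonunit (R : unitRingType) (q r : R) :
  nilpotent_el q -> ~ (r * q \is a GRing.unit).
Proof.
move=> nq /unitrP [y [h _]]; apply: (@nil_linv R q (y * r) nq).
by rewrite -mulrA.
Qed.

Theorem corollary2p50 (R : unitRingType) :
  (forall e : R, idempotent_el e -> e = 0 \/ e = 1) ->
  (GSWNC R <-> local_ring R /\ jacobson_nil R).
Proof.
move=> hid; split.
- move=> G.
  have nn : forall x : R, ~ (x \is a GRing.unit) -> nilpotent_el x.
    move=> x nx; have [e [q [ie [nq [_ hx]]]]] := G x nx.
    case: (hid e ie) => he; rewrite he in hx.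
      by case: hx => ->; rewrite ?addr0 ?subr0.
    exfalso; apply: nx; case: hx => ->.
      by rewrite addrC; exact: (@nil_unit2 R q nq).
    rewrite -(unitrN (q - 1)) opprB; case: nq => m hm; exact: (@nil_unit1 R q m hm).
  set N := fun x : R => ~ (x \is a GRing.unit).
  have li : left_ideal N.
    split; first by rewrite /N unitr0.
    split.
      move=> x y nx ny /unitrP [v [hv _]].
      have nvy := @nil_mul_nonunit R y v (nn _ ny).
      have nvx := @nil_mul_nonunit R x v (nn _ nx).
      apply: nvx; have -> : v * x = 1 - v * y.
        by rewrite -hv mulrDr addrK.
      apply: (@nil_unit2 R (- (v * y))).
      have [m hm] := nn _ nvy; exists m; by rewrite exprNn hm mulr0.
    by move=> r x nx; apply: (@nil_mul_nonunit R x r); apply: nn.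
  have sub : forall K : R -> Prop, left_ideal K -> ~ K 1 -> forall x, K x -> N x.
    move=> K [_ [_ hK]] K1 x Kx ux; apply: K1.
    by rewrite -(mulVr ux); apply: hK.
  have mN : maximal_left_ideal N.
    split=> //; split; first by rewrite /N unitr1.
    by move=> K lK K1 _; apply: sub.
  split.
    exists N; split=> // K [lK [K1 mK]] x; split; first exact: sub.
    by apply: (mK N li _ (sub K lK K1)); rewrite /N unitr1.
  by move=> x jx; apply: nn; exact: (jx N mN).
- move=> [[I [[lI [I1 mI]] uI]] jn].
  have Inil : forall x, I x -> nilpotent_el x.
    by move=> x Ix; apply: jn => K mK; apply/(uI K mK).
  move=> a na.
  have Ia : I a.
    apply: NNPP => nIa.
    set K := fun x : R => exists i r, I i /\ x = i + r * a.
    have lK : left_ideal K.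
      case: lI => [I0 [IA IM]].
      split; first by exists 0, 0; rewrite mul0r addr0.
      split.
        move=> x y [i1 [r1 [h1 ->]]] [i2 [r2 [h2 ->]]].
        exists (i1 + i2), (r1 + r2); split; first exact: IA.
        by rewrite mulrDl addrACA.
      move=> s x [i [r [h ->]]]; exists (s * i), (s * r); split; first exact: IM.
      by rewrite mulrDr mulrA.
    have IK : forall x, I x -> K x.
      by move=> x Ix; exists x, 0; rewrite mul0r addr0.
    case: (classic (K 1)) => K1; last first.
      apply: nIa; apply: (mI K lK K1 IK); exists 0, 1; split; last by rewrite add0r mul1r.
      by case: lI.
    case: K1 => i [r [Ii e1]].
    have ra : r * a = 1 - i by rewrite e1 addrC addKr.
    have ui : (1 - i) \is a GRing.unit by have [n hn] := Inil _ Ii; exact: nil_unit1 hn.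
    set b := (1 - i)^-1 * r.
    have ba : b * a = 1 by rewrite /b -mulrA ra mulVr.
    have iab : idempotent_el (a * b) by rewrite /idempotent_el mulrA -(mulrA a) ba mulr1.
    case: (hid _ iab) => hab.
      have : b = 0 by rewrite -[b]mul1r -ba -mulrA hab mulr0.
      move=> b0; move: ba; rewrite b0 mul0r => /eqP; rewrite eq_sym oner_eq0 //.
    by apply: na; apply/unitrP; exists b.
  exists 0, a; split; first by rewrite /idempotent_el mulr0.
  split; first exact: Inil.
  by split; [rewrite mulr0 mul0r | left; rewrite addr0].
Qed.
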